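(* Let $\mathcal H=\{h_i:i\in\mathbb N\}$ be the class of singletons over $\mathbb N$, where $h_i(x)=1$ if $x=i$ and $h_i(x)=-1$ otherwise. There are two maps $F_a,F_b:\{0,1\}^n\to([n]\times\{\pm1\})^n$ such that for all $x,y\in\{0,1\}^n$, with $S=(F_a(x),F_b(y))$ (the concatenation, a sample of size $2n$) and identifying $x,y$ with subsets of $[n]$: (1) if $x\cap y=\emptyset$ then $L_S(f)\ge\frac{|x|+|y|}{2n}$ for every $f:[n]\to\{\pm1\}$; (2) if $x\cap y\ne\emptyset$ then $L_S(h)\le\frac{|x|+|y|-2}{2n}$ for some $h\in\mathcal H$.
   Context: For a sample $S$ (finite sequence of pairs $(x,y)$ with $y\in\{\pm1\}$) and hypothesis $h$, $L_S(h)=\frac{1}{|S|}\sum_{(x,y)\in S}1[h(x)\ne y]$. *)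

(* Defs.v *)
From mathcomp Require Import all_boot all_order all_algebra.
Set Implicit Arguments. Unset Strict Implicit. Unset Printing Implicit Defensive.
Import Order.TTheory GRing.Theory Num.Theory.
Local Open Scope ring_scope.

(* Labels in {+1,-1} are encoded as bool: true = +1, false = -1. *)
Notation pm1 := bool (only parsing).

Definition emp_loss (X : Type) (S : seq (X * pm1)) (h : X -> pm1) : rat :=
  (count (fun p => h p.1 != p.2) S)%:R / (size S)%:R.

Definition singleton_h (n : nat) (i : nat) : 'I_n -> pm1 :=
  fun x => (nat_of_ord x == i)%N.

Definition bits_set (n : nat) (x : {ffun 'I_n -> bool}) : {set 'I_n} :=
  [set i | x i].

(* Main.v *)
Require Import Defs.
From mathcomp Require Import all_boot all_order all_algebra.
Import Order.TTheory GRing.Theory Num.Theory.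
Local Open Scope ring_scope.

Lemma cnt n (g : 'I_n -> bool) : count g (enum 'I_n) = (\sum_i (g i : nat))%N.
Proof. rewrite -sum1_count big_mkcond /= big_enum /=. by apply: eq_bigr => i _; case: (g i). Qed.
Lemma cardb n (x : {ffun 'I_n -> bool}) : #|[set i | x i]| = (\sum_i (x i : nat))%N.
Proof. rewrite -sum1dep_card big_mkcond /=. by apply: eq_bigr => i _; case: (x i). Qed.

Definition Fx n (x : {ffun 'I_n -> bool}) : n.-tuple ('I_n * bool) :=
  map_tuple (fun i => (i, x i)) (ord_tuple n).
Arguments Fx {n}.

Lemma loss_eq n (x y : {ffun 'I_n -> bool}) (f : 'I_n -> bool) :
  emp_loss (tval (Fx x) ++ tval (Fx y))%SEQ f =
  (\sum_i ((f i != x i) + (f i != y i) : nat))%N%:R / (2 * n)%:R.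
Proof.
rewrite /emp_loss size_cat !size_tuple addnn -mul2n count_cat /= !count_map.
by rewrite -enumT !cnt big_split.
Qed.

Theorem lemma3 (n : nat) :
  exists Fa Fb : {ffun 'I_n -> bool} -> n.-tuple ('I_n * bool),
    forall x y : {ffun 'I_n -> bool},
      let S := (tval (Fa x) ++ tval (Fb y))%SEQ in
      let X := bits_set x in
      let Y := bits_set y in
      ((X :&: Y = set0)%SET ->
         forall f : 'I_n -> bool,
           ((#|X| + #|Y|)%:R / (2 * n)%:R <= emp_loss S f :> rat)) /\
      ((X :&: Y != set0)%SET ->
         exists i : nat,
           (emp_loss S (@singleton_h n i) <= ((#|X| + #|Y|)%:R - 2) / (2 * n)%:R :> rat)).
Proof.
exists (@Fx n), (@Fx n) => x y S X Y; split.
- move=> dis f; rewrite /S loss_eq /X /Y /bits_set !cardb -big_split /=.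
  apply: ler_wpM2r; first by rewrite invr_ge0 ler0n.
  rewrite ler_nat; apply: leq_sum => i _.
  have : i \notin [set i | x i] :&: [set i | y i] by rewrite dis inE.
  by rewrite !inE; case: (x i); case: (y i); case: (f i).
- case/set0Pn => j; rewrite !inE => /andP [xj yj].
  exists (nat_of_ord j); rewrite /S loss_eq /X /Y /bits_set !cardb -big_split /=.
  apply: ler_wpM2r; first by rewrite invr_ge0 ler0n.
  rewrite (bigD1 j) //= (bigD1 j (P := predT)) //= xj yj /singleton_h eqxx /=.
  rewrite !add0n add1n [X in _ <= X - _]natrD [X in _ <= X - _]addrC addrK ler_nat; apply: leq_sum => i ij.
  have /negbTE -> : (nat_of_ord i != nat_of_ord j)%N by [].
  by case: (x i); case: (y i).
Qed.
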